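(* Let $G$ be a finite connected $\gamma$-doubling graph and let $\varepsilon>0$. Then Algorithm 1 (with any ranking) has, within $O(\gamma^{\lceil\log_2\frac{2}{\varepsilon}\rceil+1})$ one-to-all distance queries (or at its termination if it terminates earlier), selected a node $u$ with $e(u)\le(1+\varepsilon)\operatorname{rad}(G)$; and Algorithm 3 has, within $O(\gamma^{\lceil\log_2\frac{2}{\varepsilon}\rceil+1})$ one-to-all distance queries (or at its termination if earlier), selected a node $u$ with $e(u)\ge(1-\varepsilon)\operatorname{diam}(G)$. The $O(\cdot)$ hides an absolute constant.
   Context: $G$ is undirected, unweighted, connected with node set $V$; $d$ shortest-path distance; $e(u)=\max_v d(u,v)$; $\operatorname{rad}(G)=\min_u e(u)$, $\operatorname{diam}(G)=\max_u e(u)$; $B[u,\rho]=\{v:d(u,v)\le\rho\}$. $G$ is $\gamma$-doubling if every ball $B[u,\rho]$ is included in the union of at most $\gamma$ balls of radius $\rho/2$. A ranking $r$ is an injective map $V\to$ totally ordered set; $A_r(u)$ is the node $v$ maximizing $(d(u,v),r(v))$ lexicographically. A one-to-all distance query from $x$ computes $(d(x,v))_v$. $e_L(v)=\max_{x\in L}d(v,x)$ ($0$ if $L=\emptyset$), $e^U(v)=\min_{x\in U}(d(v,x)+e(x))$ ($+\infty$ if $U=\emptyset$). Algorithm 1: $L=K=\emptyset$; repeat: select $u$ with $e_L(u)$ minimal; query from $u$, compute $e(u)$; if $e(u)=e_L(u)$ halt outputting $u$; else query from $a=A_r(u)$, add $u$ to $K$, $a$ to $L$; then halt (outputting $c\in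 K$ of minimum eccentricity) if $\min_v e_L(v)\ge\min_{w\in K}e(w)$. Algorithm 3: $U=K=\emptyset$; repeat: select $u$ with $e^U(u)$ maximal; query from $u$, compute $e(u)$, add $u$ to $K$; choose any $x$ with $d(u,x)+e(x)=e(u)$ (e.g. $x=u$), query from $x$, add $x$ to $U$; stop when $\max_{w\in K}e(w)\ge\max_v e^U(v)$. ''Selected'' means chosen as $u$ in some iteration. *)

(* Defs.v *)
From HB Require Import structures.
From mathcomp Require Import all_boot all_order all_algebra.
From mathcomp Require Import reals exp.

Set Implicit Arguments.
Unset Strict Implicit.
Unset Printing Implicit Defensive.

Import Order.TTheory GRing.Theory Num.Theory.
Local Open Scope ring_scope.

Section Graph.
Variables (T : finType) (adj : rel T).

Definition simple_graph : Prop :=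
  symmetric adj /\ irreflexive adj.
Definition connected_graph : Prop := forall u v : T, connect adj u v.

Definition walk_of_len (u v : T) (n : nat) : bool :=
  [exists p : n.-tuple T, path adj u p && (last u p == v)].

(** Shortest-path distance: the least n such that a walk of length n from
    u to v exists (any shortest path has < #|T| edges; the value #|T| is only
    returned when v is unreachable, which never happens in a connected graph). *)
Definition dist (u v : T) : nat := find (walk_of_len u v) (iota 0 #|T|).

Definition ecc (u : T) : nat := \max_(v : T) dist u v.
Definition rad : nat := \big[minn/#|T|]_(u : T) ecc u.
Definition diam : nat := \max_(u : T) ecc u.

Definition doubling (R : realType) (gamma : nat) : Prop :=
  forall (u : T) (rho : R), 0 <= rho ->
    exists cs : seq T, (size cs <= gamma)%N /\
      forall v : T, (dist u v)%:R <= rho ->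
        exists2 c, c \in cs & (dist c v)%:R <= rho / 2.

Definition eL (L : seq T) (v : T) : nat := \max_(x <- L) dist v x.

(** A_r(u): the node v maximizing (d(u,v), r(v)) lexicographically. *)
Definition is_A disp (X : orderType disp) (r : T -> X) (u a : T) : bool :=
  [forall v, (dist u v < dist u a)%N ||
             ((dist u v == dist u a) && (r v <= r a)%O)].
Definition A_r disp (X : orderType disp) (r : T -> X) (u : T) : T :=
  odflt u [pick a | is_A r u a].

(** The halting test performed after adding u to K and a to L:
    min_v e_L(v) >= min_{w in K} e(w). *)
Definition halt1_test (L K : seq T) : bool :=
  [forall v, has (fun w => ecc w <= eL L v)%N K].

(** [run1 r L K s]: s is the sequence of nodes selected by a valid execution
    of Algorithm 1 started from state (L,K), in which the algorithm has not
    halted before the last selection of s.  Each selection costs 2 queries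
    (from u, then from A_r(u)) except possibly the last one. *)
Fixpoint run1 disp (X : orderType disp) (r : T -> X) (L K : seq T) (s : seq T)
  : bool :=
  match s with
  | [::] => true
  | u :: s' =>
      [forall v, (eL L u <= eL L v)%N] &&
      (if s' is [::] then true else
         [&& ecc u != eL L u,
             ~~ halt1_test (A_r r u :: L) (u :: K) &
             run1 r (A_r r u :: L) (u :: K) s'])
  end.

Fixpoint halts1 disp (X : orderType disp) (r : T -> X) (L K : seq T)
  (s : seq T) : bool :=
  match s with
  | [::] => false
  | [:: u] => (ecc u == eL L u) || halt1_test (A_r r u :: L) (u :: K)
  | u :: s' => halts1 r (A_r r u :: L) (u :: K) s'
  end.

(** e^U(v) = min_{x in U} (d(v,x) + e(x)), with None standing for +infinity
    (U empty). *)
Definition eU (U : seq T) (v : T) : option nat :=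
  if U is x0 :: U' then
    Some (\big[minn/(dist v x0 + ecc x0)%N]_(x <- U') (dist v x + ecc x)%N)
  else None.

Definition ole (a b : option nat) : bool :=
  match a, b with
  | _, None => true
  | None, Some _ => false
  | Some m, Some n => (m <= n)%N
  end.

(** stopping test: max_{w in K} e(w) >= max_v e^U(v) *)
Definition halt3_test (U K : seq T) : bool :=
  has (fun w => [forall v, ole (eU U v) (Some (ecc w))]) K.

(** [run3 U K s]: s is the sequence of pairs (u, x) (selected node, second
    queried node) of a valid execution of Algorithm 3 from state (U,K), in
    which the algorithm did not stop before the last iteration of s.  Each
    iteration costs 2 queries. *)
Fixpoint run3 (U K : seq T) (s : seq (T * T)) : bool :=
  match s with
  | [::] => true
  | (u, x) :: s' =>
      [&& [forall v, ole (eU U v) (eU U u)],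
          (dist u x + ecc x == ecc u)%N &
          (if s' is [::] then true else
             ~~ halt3_test (x :: U) (u :: K) && run3 (x :: U) (u :: K) s')]
  end.

Fixpoint halts3 (U K : seq T) (s : seq (T * T)) : bool :=
  match s with
  | [::] => false
  | [:: (u, x)] => halt3_test (x :: U) (u :: K)
  | (u, x) :: s' => halts3 (x :: U) (u :: K) s'
  end.

End Graph.

Definition budget (R : realType) (gamma : nat) (eps : R) : R :=
  (gamma%:R : R) ^ (Num.ceil (ln (2 / eps) / ln 2) + 1)%R.

(* Main.v *)
Require Import Defs.
From HB Require Import structures.
From mathcomp Require Import all_boot all_order all_algebra.
From mathcomp Require Import reals exp.
From mathcomp Require Import lra zify.
Import Order.TTheory GRing.Theory Num.Theory.
Import Defs.

Section Dist.
Variables (T : finType) (adj : rel T).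
Hypothesis sym : symmetric adj.
Hypothesis conn : connected_graph adj.

Lemma walkP u v n : reflect (exists p : seq T, [/\ size p = n, path adj u p & last u p = v])
  (walk_of_len adj u v n).
Proof.
apply: (iffP existsP).
  by case=> p /andP[pp /eqP lp]; exists p; rewrite size_tuple.
case=> p [sp pp lp]; have sp' : size p == n by rewrite sp.
by exists (Tuple sp'); rewrite /= pp lp eqxx.
Qed.

Lemma walk_short u v : exists2 n, (n < #|T|)%N & walk_of_len adj u v n.
Proof.
have /connectP [p pp lp] := conn u v.
rewrite lp; case: (shortenP pp) => p' pp' up' _.
exists (size p'); last by apply/walkP; exists p'.
move/card_uniqP: up' => /= cu.
by rewrite -cu; apply/max_card.
Qed.

Lemma dist_walk u v : walk_of_len adj u v (dist adj u v).
Proof.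
have [n nT wn] := walk_short u v.
have hh : has (walk_of_len adj u v) (iota 0 #|T|).
  by apply/hasP; exists n => //; rewrite mem_iota.
have := nth_find 0 hh; rewrite nth_iota ?add0n //.
by move: hh; rewrite has_find size_iota.
Qed.

Lemma dist_min u v n : walk_of_len adj u v n -> (dist adj u v <= n)%N.
Proof.
move=> wn; rewrite leqNgt; apply/negP => lt.
have := before_find 0 lt; rewrite nth_iota; last first.
  apply: (leq_trans lt); rewrite /dist; have := find_size (walk_of_len adj u v) (iota 0 #|T|); by rewrite size_iota.
by rewrite add0n wn.
Qed.

Lemma dist_tri u v w : (dist adj u w <= dist adj u v + dist adj v w)%N.
Proof.
apply: dist_min; apply/walkP.
have /walkP [p [sp pp lp]] := dist_walk u v.
have /walkP [q [sq pq lq]] := dist_walk v w.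
exists (p ++ q); rewrite size_cat sp sq cat_path last_cat lp pp pq lq; split=> //.
Qed.

Lemma dist_sym u v : dist adj u v = dist adj v u.
Proof.
suff H : forall u v, (dist adj u v <= dist adj v u)%N.
  by apply/eqP; rewrite eqn_leq !H.
move=> {}u {}v; apply: dist_min; apply/walkP.
have /walkP [p [sp pp lp]] := dist_walk v u.
exists (rev (belast v p)); rewrite size_rev size_belast sp; split=> //.
  rewrite -lp rev_path; rewrite (@eq_path _ _ adj) // => x y /=; by rewrite sym.
rewrite -lp; case: p {sp pp lp} => //= x p.
by rewrite rev_cons last_rcons.
Qed.

Lemma dist_le_ecc u v : (dist adj u v <= ecc adj u)%N.
Proof. exact: leq_bigmax. Qed.

Lemma ecc_tri v x : (ecc adj v <= dist adj v x + ecc adj x)%N.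
Proof.
apply/bigmax_leqP => w _.
apply: (leq_trans (dist_tri v x w)); rewrite leq_add2l; exact: dist_le_ecc.
Qed.


Lemma dist0 u : dist adj u u = 0%N.
Proof. apply/eqP; rewrite -leqn0; apply: dist_min; apply/walkP; by exists [::]. Qed.

Lemma combine (P Q : T -> T -> Prop) m (cs0 : seq T) :
  (forall c, exists cs : seq T, (size cs <= m)%N /\ forall v, Q c v -> exists2 d, d \in cs & P d v) ->
  exists cs : seq T, (size cs <= m * size cs0)%N /\
    forall c v, c \in cs0 -> Q c v -> exists2 d, d \in cs & P d v.
Proof.
move=> H; elim: cs0 => [|c cs0 [big [sb hb]]].
  by exists [::]; split=> //.
have [cs [scs hcs]] := H c.
exists (cs ++ big); split.
  by rewrite size_cat /= mulnS leq_add.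
move=> c' v; rewrite inE => /orP[/eqP-> | ic] q.
  by have [d dc pd] := hcs v q; exists d; rewrite // mem_cat dc.
by have [d dc pd] := hb c' v ic q; exists d; rewrite // mem_cat dc orbT.
Qed.

Local Open Scope ring_scope.

Variable R : realType.

Lemma cover_iter (gamma : nat) : doubling adj R gamma ->
  forall k (u : T) (rho : R), 0 <= rho -> exists cs : seq T, (size cs <= gamma ^ k)%N /\
    forall v, (dist adj u v)%:R <= rho -> exists2 c, c \in cs & (dist adj c v)%:R <= rho / 2 ^+ k.
Proof.
move=> hd; elim=> [|k IH] u rho rho0.
  exists [:: u]; split=> // v hv; exists u; rewrite ?inE //.
  by rewrite expr0 divr1.
have [cs0 [s0 h0]] := hd u rho rho0.
have [cs [scs hcs]] := @combine (fun d v => (dist adj d v)%:R <= rho / 2 / 2 ^+ k)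
   (fun c v => (dist adj c v)%:R <= rho / 2) (gamma ^ k) cs0
   (fun c => IH c (rho / 2) (divr_ge0 rho0 (ler0n _ 2))).
exists cs; split.
  apply: (leq_trans scs); rewrite expnSr; exact: leq_mul.
move=> v hv; have [c ic hc] := h0 v hv.
have [d id hdd] := hcs c v ic hc; exists d => //.
by move: hdd; rewrite -mulrA -invfM exprSr [2 * _]mulrC.
Qed.

Lemma packing_count (cs pts : seq T) (r : R) x0 : 0 <= r ->
  (forall v, v \in pts -> exists2 c, c \in cs & (dist adj c v)%:R <= r) ->
  (forall i j, (i < j < size pts)%N -> 2 * r < (dist adj (nth x0 pts i) (nth x0 pts j))%:R) ->
  (size pts <= size cs)%N.
Proof.
move=> r0 hcov hfar.
have far2 : forall i j, (i < size pts)%N -> (j < size pts)%N -> i != j ->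
    2 * r < (dist adj (nth x0 pts i) (nth x0 pts j))%:R.
  move=> i j hi hj; case: ltngtP => // hij _.
    by apply: hfar; rewrite hij.
  by rewrite dist_sym; apply: hfar; rewrite hij.
have upts : uniq pts.
  apply/(uniqP x0) => i j hi hj e; apply/eqP; apply: contraLR isT => nij.
  have := far2 i j hi hj nij; rewrite e dist0 //.
  by rewrite ltNge mulr_ge0.
pose f v := odflt v [pick c in cs | (dist adj c v)%:R <= r].
have hf : forall v, v \in pts -> f v \in cs /\ (dist adj (f v) v)%:R <= r.
  move=> v iv; rewrite /f; case: pickP => [c /andP[ic hc] | no] //=.
  by have [c ic hc] := hcov v iv; have := no c; rewrite ic hc.
have finj : {in pts &, injective f}.
  move=> v w iv iw e; apply/eqP; apply: contraLR isT => nvw.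
  have [i1 h1] := hf v iv; have [i2 h2] := hf w iw.
  have nix : index v pts != index w pts.
    by apply: contra nvw => /eqP e'; rewrite -(nth_index x0 iv) -(nth_index x0 iw) e'.
  have hiv : (index v pts < size pts)%N by rewrite index_mem.
  have hiw : (index w pts < size pts)%N by rewrite index_mem.
  have := far2 _ _ hiv hiw nix.
  rewrite !nth_index // => lt; exfalso; move: lt; apply/negP; rewrite -leNgt.
  have t := dist_tri v (f v) w.
  rewrite (dist_sym v (f v)) e in t; rewrite e in h1.
  have t' : (dist adj v w)%:R <= (dist adj (f w) v)%:R + (dist adj (f w) w)%:R :> R.
    by rewrite -natrD ler_nat.
  by apply: (le_trans t'); rewrite mulrDl mul1r lerD.
have sz : size pts = size (map f pts) by rewrite size_map.
rewrite sz; apply: uniq_leq_size; first by rewrite map_inj_in_uniq.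
by move=> c /mapP [v iv ->]; have [] := hf v iv.
Qed.
Local Close Scope ring_scope.

Lemma A_far disp (X : orderType disp) (r : T -> X) u v :
  (dist adj u v <= dist adj u (A_r adj r u))%N.
Proof.
have hT : (0 < #|T|)%N by apply/card_gt0P; exists u.
have [a0 ea0] := @bigop.eq_bigmax _ (fun v => dist adj u v) hT.
pose P := fun a => dist adj u a == dist adj u a0.
have Pa0 : P a0 by rewrite /P.
case: (Order.TotalTheory.arg_maxP r Pa0) => i Pi hi.
have isA : is_A adj r u i.
  apply/forallP => w; have : (dist adj u w <= dist adj u i)%N.
    by rewrite (eqP Pi) -ea0; exact: dist_le_ecc.
  rewrite leq_eqVlt => /orP[/eqP e|->] //.
  by rewrite e ltnn /=; have := hi w; rewrite /P e (eqP Pi) eqxx; apply.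
rewrite /A_r; case: pickP => [a ha|no]; last by have := no i; rewrite isA.
by move/forallP: ha => /(_ v) /orP [/ltnW|/andP[/eqP -> _]].
Qed.

Lemma eL_ge L v x : x \in L -> (dist adj v x <= eL adj L v)%N.
Proof. by move=> xL; apply: (leq_bigmax_seq x xL). Qed.

Lemma eL_le_ecc L v : (eL adj L v <= ecc adj v)%N.
Proof. by apply/bigmax_leqP_seq => x _ _; apply: dist_le_ecc. Qed.

Lemma G1 disp (X : orderType disp) (r : T -> X) c : forall s L K, run1 adj r L K s ->
  forall j x0, (j < size s)%N -> forall x, (x \in L \/ exists2 i, (i < j)%N & x = A_r adj r (nth x0 s i)) ->
  (dist adj (nth x0 s j) x <= ecc adj c)%N.
Proof.
elim=> [|u s' IH] L K //= /andP[hmin rest] [|j] x0 hj x hx /=.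
  case: hx => [xL|[i //]].
  apply: (leq_trans (eL_ge L u x xL)); apply: (leq_trans (forallP hmin c)).
  exact: eL_le_ecc.
case: s' IH rest hj hx => [|u' s''] IH rest hj hx //.
case/and3P: rest => _ _ rr.
apply: (IH _ _ rr) => //.
case: hx => [xL|[[|i] hi ->]]; first by left; rewrite inE xL orbT.
  by left; rewrite inE eqxx.
by right; exists i.
Qed.

Lemma H1 disp (X : orderType disp) (r : T -> X) c : forall s L K, run1 adj r L K s ->
  halts1 adj r L K s -> exists2 w, (w \in s) || (w \in K) & (ecc adj w <= ecc adj c)%N.
Proof.
elim=> [|u s' IH] L K //= /andP[hmin rest].
case: s' IH rest => [|u' s''] IH rest.
  case/orP => [/eqP e|/forallP /(_ c) /hasP [w iw hw]].
    exists u; first by rewrite inE eqxx.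
    rewrite e; apply: (leq_trans (forallP hmin c)); exact: eL_le_ecc.
  exists w; first by move: iw; rewrite !inE.
  apply: (leq_trans hw); exact: eL_le_ecc.
case/and3P: rest => _ _ rr hh.
have [w iw hw] := IH _ _ rr hh.
exists w => //; move: iw; rewrite !inE.
by case/orP=> [->|/orP[->|->]]; rewrite ?orbT.
Qed.

Lemma bigmin_le (F : T -> nat) idx U y : y \in U -> (\big[minn/idx]_(z <- U) F z <= F y)%N.
Proof.
elim: U => [|z U IH] //; rewrite inE big_cons => /orP[/eqP->|yU].
  exact: geq_minl.
exact: leq_trans (geq_minr _ _) (IH yU).
Qed.

Lemma bigmin_le_idx (F : T -> nat) idx U : (\big[minn/idx]_(z <- U) F z <= idx)%N.
Proof.
elim: U => [|z U IH]; first by rewrite big_nil.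
rewrite big_cons.
exact: leq_trans (geq_minr _ _) IH.
Qed.

Lemma bigmin_ge (F : T -> nat) idx U a : (forall y, a <= F y)%N -> (a <= idx)%N ->
  (a <= \big[minn/idx]_(z <- U) F z)%N.
Proof.
move=> hF hi; elim/big_ind: _ => // m n hm hn.
by rewrite leq_min hm hn.
Qed.

Lemma eU_le U v x m : x \in U -> eU adj U v = Some m -> (m <= dist adj v x + ecc adj x)%N.
Proof.
case: U => [|x0 U] //= xU [<-].
move: xU; rewrite inE => /orP[/eqP->|xU]; first exact: bigmin_le_idx.
exact: bigmin_le.
Qed.

Lemma eU_ge U v m : eU adj U v = Some m -> (ecc adj v <= m)%N.
Proof.
case: U => [|x0 U] //= [<-].
by apply: bigmin_ge => *; apply: ecc_tri.
Qed.

Lemma diam_attained : (0 < #|T|)%N -> exists p, diam adj = ecc adj p.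
Proof. by move=> hT; have [p e] := @bigop.eq_bigmax _ (fun v => ecc adj v) hT; exists p. Qed.

Lemma G3 p : diam adj = ecc adj p -> forall s U K, run3 adj U K s ->
  forall j p0, (j < size s)%N -> forall x, (x \in U \/ exists2 i, (i < j)%N & x = (nth p0 s i).2) ->
  (diam adj <= dist adj (nth p0 s j).1 x + ecc adj x)%N.
Proof.
move=> hp; elim=> [|[u y] s' IH] U K //= /and3P[hmax hxy rest] [|j] p0 hj x hx /=.
  case: hx => [xU|[i //]].
  clear rest IH; case: U hmax xU => [|x0 U] // hmax xU.
  have := forallP hmax p; rewrite /= => le.
  apply: (leq_trans _ (eU_le _ _ _ _ xU (erefl _))).
  apply: leq_trans le; rewrite hp.
  exact: (eU_ge (x0::U) p _ (erefl _)).
case: s' IH rest hj hx => [|[u' y'] s''] IH rest hj hx //.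
case/andP: rest => _ rr.
apply: (IH _ _ rr) => //.
case: hx => [xU|[[|i] hi ->]]; first by left; rewrite inE xU orbT.
  by left; rewrite inE eqxx.
by right; exists i.
Qed.

Lemma G3' : forall s U K, run3 adj U K s ->
  forall i p0, (i < size s)%N ->
  (dist adj (nth p0 s i).1 (nth p0 s i).2 + ecc adj (nth p0 s i).2 = ecc adj (nth p0 s i).1)%N.
Proof.
elim=> [|[u y] s' IH] U K //= /and3P[hmax hxy rest] [|i] p0 hi /=.
  exact/eqP.
case: s' IH rest hi => [|[u' y'] s''] IH rest hi //.
case/andP: rest => _ rr.
exact: (IH _ _ rr).
Qed.

Lemma H3 p : diam adj = ecc adj p -> forall s U K, run3 adj U K s ->
  halts3 adj U K s -> exists2 w, (w \in map fst s) || (w \in K) & (diam adj <= ecc adj w)%N.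
Proof.
move=> hp; elim=> [|[u y] s' IH] U K //= /and3P[hmax hxy rest].
case: s' IH rest => [|[u' y'] s''] IH rest.
  move=> hh; have hh' : halt3_test adj (y::U) (u::K) := hh.
  case/hasP: hh' => w iw /forallP /(_ p) hw.
  exists w; first by move: iw; rewrite !inE.
  rewrite hp; apply: leq_trans hw.
  exact: (eU_ge (y::U) p _ (erefl _)).
case/andP: rest => _ rr hh.
have [w iw hw] := IH _ _ rr hh.
exists w => //; move: iw; rewrite !inE.
by case/orP=> [->|/orP[->|->]]; rewrite ?orbT.
Qed.

Local Open Scope ring_scope.

Lemma ecc_lt_card u : (ecc adj u < #|T|)%N.
Proof.
have hT : (0 < #|T|)%N by apply/card_gt0P; exists u.
rewrite /ecc; have [a ->] := @bigop.eq_bigmax _ (fun v => dist adj u v) hT.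
have [n nT wn] := walk_short u a.
exact: leq_ltn_trans (dist_min _ _ _ wn) nT.
Qed.

Lemma ecc_le_rad c : (forall v, ecc adj c <= ecc adj v)%N -> (ecc adj c <= rad adj)%N.
Proof.
move=> hc; rewrite /rad; elim/big_ind: _ => //.
  exact: ltnW (ecc_lt_card c).
by move=> m n hm hn; rewrite leq_min hm hn.
Qed.

Lemma gamma_pos gamma (u : T) : doubling adj R gamma -> (1 <= gamma)%N.
Proof.
move=> hd; have [cs [scs hcs]] := hd u (dist adj u u)%:R (ler0n _ _).
have [c ic _] := hcs u (lexx _).
apply: leq_trans scs; by case: (cs) ic.
Qed.

Lemma half_le (eps a : R) k : 0 <= a -> 2 <= eps * 2 ^+ k -> 2 * (a / 2 ^+ k) <= eps * a.
Proof.
move=> a0 h; have t0 : 0 < (2 : R) ^+ k by rewrite exprn_gt0.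
rewrite mulrCA mulrC; apply: ler_wpM2r => //.
by rewrite ler_pdivrMr.
Qed.

Lemma alg1_main gamma (eps bound : R) k :
  doubling adj R gamma -> 0 < eps -> 2 <= eps * 2 ^+ k -> 0 <= bound ->
  ((1 <= gamma)%N -> (2 * (gamma ^ k).+2)%:R <= bound) ->
  forall (disp : Order.disp_t) (X : orderType disp) (r : T -> X),
       forall s : seq T, run1 adj r [::] [::] s ->
         halts1 adj r [::] [::] s \/ bound < (2 * size s)%:R ->
         exists2 u : T, u \in s &
           ((2 * index u s)%:R <= bound /\
            (ecc adj u)%:R <= (1 + eps) * (rad adj)%:R).
Proof.
move=> hd e0 hk hb0 hb disp X r s hrun hcase.
case: s hrun hcase => [|u0 s1] hrun hcase.
  by case: hcase => //; rewrite ltNge hb0.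
set s := u0 :: s1 in hrun hcase *.
have hb' := hb (gamma_pos _ u0 hd).
set N := (gamma ^ k).+2 in hb'.
case: (@arg_minnP T u0 xpredT (ecc adj) isT) => c _ hc.
set Rn := ecc adj c.
have hRr : (Rn <= rad adj)%N by apply: ecc_le_rad => v; exact: hc.
have good : forall w, (ecc adj w <= Rn)%N -> (ecc adj w)%:R <= (1 + eps) * (rad adj)%:R.
  move=> w hw; have : (ecc adj w <= rad adj)%N := leq_trans hw hRr.
  rewrite -(ler_nat R) => h; apply: (le_trans h); rewrite -[X in X <= _]mul1r.
  by apply: ler_wpM2r => //; rewrite lerDl ltW.
have idxb : forall w, (index w s < N)%N -> (2 * index w s)%:R <= bound.
  move=> w hw; apply: le_trans hb'; rewrite ler_nat leq_mul2l /=; exact: ltnW.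
case: (leqP (size s) N) => hsN.
  have hh : halts1 adj r [::] [::] s.
    case: hcase => // hlt; exfalso; move: hlt; apply/negP; rewrite -leNgt.
    by apply: le_trans hb'; rewrite ler_nat leq_mul2l hsN orbT.
  have [w iw hw] := H1 _ _ _ c _ _ _ hrun hh.
  rewrite orbF in iw; exists w => //; split; last exact: good.
  by apply: idxb; apply: leq_trans hsN; rewrite index_mem.
pose gd := fun w => (ecc adj w)%:R <= (1 + eps) * (rad adj)%:R.
case: (boolP (has gd (take N s))) => hg.
  case/hasP: hg => w iw gw; exists w; first exact: mem_take iw.
  by split => //; apply: idxb; apply: index_ltn.
exfalso.
have bad : forall j, (j < N)%N -> (1 + eps) * (rad adj)%:R < (ecc adj (nth u0 s j))%:R.
  move=> j hj; move/hasPn: hg => /(_ (nth u0 s j)).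
  rewrite -(nth_take _ hj) mem_nth ?size_take ?hsN // => /(_ isT).
  by rewrite /gd -ltNge.
have far : forall i j, (i < j < N)%N -> eps * Rn%:R < (dist adj (nth u0 s i) (nth u0 s j))%:R.
  move=> i j /andP[hij hjN].
  have h1 := bad i (ltn_trans hij hjN).
  set ui := nth u0 s i in h1 *; set uj := nth u0 s j.
  have h2 : (ecc adj ui <= dist adj ui (A_r adj r ui))%N.
    by apply/bigmax_leqP => v _; apply: A_far.
  have h3 := dist_tri ui uj (A_r adj r ui).
  have h4 : (dist adj uj (A_r adj r ui) <= Rn)%N.
    apply: (G1 _ _ _ c _ _ _ hrun) => //; first exact: ltn_trans hjN hsN.
    by right; exists i.
  have h5 : (ecc adj ui <= dist adj ui uj + Rn)%N.
    by apply: leq_trans h2 (leq_trans h3 _); rewrite leq_add2l.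
  move: h5 hRr; rewrite -!(ler_nat R) natrD => h5 hRr'.
  have r0 : 0 <= (Rn%:R : R) by [].
  have : eps * Rn%:R <= eps * (rad adj)%:R by apply: ler_wpM2l => //; exact: ltW.
  move: h1; set E := (ecc adj ui)%:R; set Dd := (dist adj ui uj)%:R; set Rr := (rad adj)%:R.
  move=> h1 hh; rewrite mulrDl mul1r in h1.
  set P := eps * Rn%:R in hh *; set Q := eps * Rr in h1 hh *.
  have : Rr + Q < Dd + Rn%:R := lt_le_trans h1 h5.
  move=> h6; rewrite -(ltrD2r Rn%:R); apply: le_lt_trans h6; rewrite addrC lerD //.
have [cs [scs hcs]] := cover_iter _ hd k (A_r adj r u0) Rn%:R (ler0n R Rn).
pose pts := [seq nth u0 s j | j <- iota 1 (gamma ^ k).+1].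
have hszp : size pts = (gamma ^ k).+1 by rewrite size_map size_iota.
have H0 : 0 <= (Rn%:R : R) / 2 ^+ k by rewrite divr_ge0 // exprn_ge0.
have Hcov : forall v, v \in pts -> exists2 c0, c0 \in cs & (dist adj c0 v)%:R <= (Rn%:R : R) / 2 ^+ k.
  move=> v /mapP [j]; rewrite mem_iota => /andP[j1 j2] ->.
  apply: hcs; rewrite dist_sym ler_nat; apply: (G1 _ _ _ c _ _ _ hrun) => //.
    by move: j2; rewrite add1n => j2; exact: ltn_trans j2 hsN.
  by right; exists 0%N.
have Hfar : forall i j, (i < j < size pts)%N ->
    2 * ((Rn%:R : R) / 2 ^+ k) < (dist adj (nth u0 pts i) (nth u0 pts j))%:R.
  move=> i j /andP[hij]; rewrite hszp => hj.
  rewrite !(nth_map 0%N) ?size_iota //; last exact: ltn_trans hij hj.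
  rewrite !nth_iota //; last exact: ltn_trans hij hj.
  apply: le_lt_trans (half_le _ _ _ (ler0n _ Rn) hk) (far _ _ _).
  by rewrite !add1n ltnS hij /= ltnS.
have hp := packing_count _ _ _ _ H0 Hcov Hfar.
by move: (leq_trans hp scs); rewrite hszp ltnn.
Qed.


Lemma alg1_triv (eps bound : R) : 1 <= eps -> 0 <= bound ->
  forall (disp : Order.disp_t) (X : orderType disp) (r : T -> X),
       forall s : seq T, run1 adj r [::] [::] s ->
         halts1 adj r [::] [::] s \/ bound < (2 * size s)%:R ->
         exists2 u : T, u \in s &
           ((2 * index u s)%:R <= bound /\
            (ecc adj u)%:R <= (1 + eps) * (rad adj)%:R).
Proof.
move=> e1 hb0 disp X r s hrun hcase.
case: s hrun hcase => [|u0 s1] hrun hcase; first by case: hcase => //; rewrite ltNge hb0.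
exists u0; first exact: mem_head.
rewrite /= eqxx muln0; split => //.
case: (@arg_minnP T u0 xpredT (ecc adj) isT) => c _ hc.
have hRr : (ecc adj c <= rad adj)%N by apply: ecc_le_rad => v; exact: hc.
have h1 : (ecc adj u0 <= 2 * rad adj)%N.
  apply: leq_trans (ecc_tri u0 c) _; rewrite dist_sym mul2n -addnn.
  by apply: leq_add; [apply: leq_trans (dist_le_ecc _ _) hRr|].
move: h1; rewrite -(ler_nat R) natrM => h1; apply: (le_trans h1).
apply: ler_wpM2r => //; rewrite -[2%:R]/(1 + 1 : R); by rewrite lerD2l.
Qed.

Lemma alg3_triv (eps bound : R) : 1 <= eps -> 0 <= bound ->
    (forall s : seq (T * T), run3 adj [::] [::] s ->
       halts3 adj [::] [::] s \/ bound < (2 * size s)%:R ->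
       exists2 p : T * T, p \in s &
         ((2 * index p s)%:R <= bound /\
          (1 - eps) * (diam adj)%:R <= (ecc adj p.1)%:R)).
Proof.
move=> e1 hb0 s hrun hcase.
case: s hrun hcase => [|p0 s1] hrun hcase; first by case: hcase => //; rewrite ltNge hb0.
exists p0; first exact: mem_head.
rewrite /= eqxx muln0; split => //.
apply: le_trans (ler0n _ _); apply: mulr_le0_ge0 => //.
by rewrite subr_le0.
Qed.

Lemma alg3_main gamma (eps bound : R) k :
  doubling adj R gamma -> 0 < eps -> 2 <= eps * 2 ^+ k -> 0 <= bound ->
  ((1 <= gamma)%N -> (2 * (gamma ^ k).+1)%:R <= bound) ->
    (forall s : seq (T * T), run3 adj [::] [::] s ->
       halts3 adj [::] [::] s \/ bound < (2 * size s)%:R ->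
       exists2 p : T * T, p \in s &
         ((2 * index p s)%:R <= bound /\
          (1 - eps) * (diam adj)%:R <= (ecc adj p.1)%:R)).
Proof.
move=> hd e0 hk hb0 hb s hrun hcase.
case: s hrun hcase => [|q0 s1] hrun hcase; first by case: hcase => //; rewrite ltNge hb0.
set s := q0 :: s1 in hrun hcase *.
have hb' := hb (gamma_pos _ q0.1 hd).
set N := (gamma ^ k).+1 in hb'.
have hT : (0 < #|T|)%N by apply/card_gt0P; exists q0.1.
have [p hp] := diam_attained hT.
set D := diam adj.
have good : forall w, (D <= ecc adj w)%N -> (1 - eps) * D%:R <= (ecc adj w)%:R.
  move=> w; rewrite -(ler_nat R) => hw.
  have : 0 <= eps * D%:R by rewrite mulr_ge0 // ltW.
  lra.
have idxb : forall w, (index w s < N)%N -> (2 * index w s)%:R <= bound.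
  move=> w hw; apply: le_trans hb'; rewrite ler_nat leq_mul2l /=; exact: ltnW.
case: (leqP (size s) N) => hsN.
  have hh : halts3 adj [::] [::] s.
    case: hcase => // hlt; exfalso; move: hlt; apply/negP; rewrite -leNgt.
    by apply: le_trans hb'; rewrite ler_nat leq_mul2l hsN orbT.
  have [w iw hw] := H3 _ hp _ _ _ hrun hh.
  rewrite orbF in iw; case/mapP: iw hw => q iq -> hw.
  exists q => //; split; last exact: good.
  by apply: idxb; apply: leq_trans hsN; rewrite index_mem.
pose gd := fun q : T * T => (1 - eps) * D%:R <= (ecc adj q.1)%:R.
case: (boolP (has gd (take N s))) => hg.
  case/hasP: hg => w iw gw; exists w; first exact: mem_take iw.
  by split => //; apply: idxb; apply: index_ltn.
exfalso.
have bad : forall j, (j < N)%N -> (ecc adj (nth q0 s j).1)%:R < (1 - eps) * D%:R.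
  move=> j hj; move/hasPn: hg => /(_ (nth q0 s j)).
  rewrite -(nth_take _ hj) mem_nth ?size_take ?hsN // => /(_ isT).
  by rewrite /gd -ltNge.
have far : forall i j, (i < j < N)%N -> eps * D%:R < (dist adj (nth q0 s i).1 (nth q0 s j).1)%:R.
  move=> i j /andP[hij hjN].
  have h1 := bad i (ltn_trans hij hjN).
  have h2 := G3' _ _ _ hrun i q0 (ltn_trans (ltn_trans hij hjN) hsN).
  have h4 : (D <= dist adj (nth q0 s j).1 (nth q0 s i).2 + ecc adj (nth q0 s i).2)%N.
    apply: (G3 _ hp _ _ _ hrun) => //; first exact: ltn_trans hjN hsN.
    by right; exists i.
  have h3 := dist_tri (nth q0 s j).1 (nth q0 s i).1 (nth q0 s i).2.
  have h5 : (D <= dist adj (nth q0 s j).1 (nth q0 s i).1 + ecc adj (nth q0 s i).1)%N.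
    by rewrite -h2 addnA; apply: leq_trans h4 _; rewrite leq_add2r.
  move: h5; rewrite dist_sym -(ler_nat R) natrD => h5.
  lra.
have [cs [scs hcs]] := cover_iter _ hd k p D%:R (ler0n R D).
pose pts := [seq (nth q0 s j).1 | j <- iota 0 N].
have hszp : size pts = N by rewrite size_map size_iota.
have H0 : 0 <= (D%:R : R) / 2 ^+ k by rewrite divr_ge0 // exprn_ge0.
have Hcov : forall v, v \in pts -> exists2 c0, c0 \in cs & (dist adj c0 v)%:R <= (D%:R : R) / 2 ^+ k.
  move=> v _; apply: hcs; rewrite ler_nat /D hp; exact: dist_le_ecc.
have Hfar : forall i j, (i < j < size pts)%N ->
    2 * ((D%:R : R) / 2 ^+ k) < (dist adj (nth q0.1 pts i) (nth q0.1 pts j))%:R.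
  move=> i j /andP[hij]; rewrite hszp => hj.
  rewrite !(nth_map 0%N) ?size_iota //; last exact: ltn_trans hij hj.
  rewrite !nth_iota //; last exact: ltn_trans hij hj.
  apply: le_lt_trans (half_le _ _ _ (ler0n _ D) hk) (far _ _ _).
  by rewrite !add0n hij.
have hp' := packing_count _ _ _ _ H0 Hcov Hfar.
by move: (leq_trans hp' scs); rewrite hszp ltnn.
Qed.


End Dist.

Local Open Scope ring_scope.

Lemma budgetE (R : realType) (gamma : nat) (eps : R) : 0 < eps -> eps < 1 ->
  exists k : nat, budget gamma eps = (gamma%:R) ^+ k.+1 /\ 2 <= eps * 2 ^+ k.
Proof.
move=> e0 e1.
set x := ln (2 / eps) / ln 2.
have l2 : 0 < ln (2 : R) by apply: ln_gt0; rewrite ltr1n.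
have h2e : 2 < 2 / eps.
  by rewrite ltr_pdivlMr //; lra.
have p2e : (2 / eps) \in Num.pos by rewrite posrE divr_gt0.
have p2 : (2 : R) \in Num.pos by rewrite posrE.
have x1 : 1 < x.
  rewrite /x ltr_pdivlMr // mul1r ltr_ln //.
have cx := ceil_ge x.
have c0 : (0 <= Num.ceil x)%R by rewrite ceil_ge0; lra.
have [k ek] : exists k : nat, Num.ceil x = k%:Z.
  by case: (Num.ceil x) c0 => [k|k] //; exists k.
exists k; split.
  by rewrite /budget -/x ek -PoszD addn1.
rewrite ek in cx.
have hk : ln (2 / eps) <= ln ((2 : R) ^+ k).
  rewrite lnXn //; move: cx; rewrite /x ler_pdivrMr // => h; apply: (le_trans h).
  by rewrite mulrC (mulr_natr (ln (2:R)) k).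

rewrite ler_ln // in hk; last by rewrite posrE exprn_gt0.
by move: hk; rewrite ler_pdivrMr // mulrC.
Qed.

Theorem proposition3 :
  exists C : nat,
  forall (R : realType) (T : finType) (adj : rel T) (gamma : nat) (eps : R),
    simple_graph adj -> connected_graph adj -> doubling adj R gamma ->
    0 < eps ->
    let bound := C%:R * budget gamma eps in
    (* Algorithm 1, any ranking, any tie-breaking *)
    (forall (disp : Order.disp_t) (X : orderType disp) (r : T -> X),
       injective r ->
       forall s : seq T, run1 adj r [::] [::] s ->
         halts1 adj r [::] [::] s \/ bound < (2 * size s)%:R ->
         exists2 u : T, u \in s &
           ((2 * index u s)%:R <= bound /\
            (ecc adj u)%:R <= (1 + eps) * (rad adj)%:R)) /\
    (* Algorithm 3, any tie-breaking and any choice of x *)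
    (forall s : seq (T * T), run3 adj [::] [::] s ->
       halts3 adj [::] [::] s \/ bound < (2 * size s)%:R ->
       exists2 p : T * T, p \in s &
         ((2 * index p s)%:R <= bound /\
          (1 - eps) * (diam adj)%:R <= (ecc adj p.1)%:R)).
Proof.
exists 6%N => R T adj gamma eps [sym _] conn hd e0 bound.
have hb0 : 0 <= bound.
  rewrite /bound /budget; apply: mulr_ge0 => //; apply: exprz_ge0; exact: ler0n.
case: (lerP 1 eps) => e1.
  split.
    move=> disp X r _; exact: (alg1_triv _ _ sym conn _ _ _ e1 hb0).
  exact: (alg3_triv _ adj _ _ _ e1 hb0).
have [k [bk hk]] := budgetE _ gamma _ e0 e1.
have hN : forall m, (m <= 2)%N -> (1 <= gamma)%N -> (2 * (gamma ^ k + m))%N%:R <= bound.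
  move=> m hm hg; rewrite /bound bk -natrX -natrM ler_nat expnS.
  have : (1 <= gamma ^ k)%N by rewrite expn_gt0 hg.
  move: (gamma ^ k)%N => g g1.
  apply: (@leq_trans (6 * g)); first by rewrite mulnDr; lia.
  by rewrite leq_mul2l /= mulnC leq_pmulr.
split.
  move=> disp X r _; apply: (alg1_main _ _ sym conn _ _ _ _ _ hd e0 hk hb0).
  by move=> hg; rewrite -[(gamma ^ k).+2]addn2; apply: hN.
apply: (alg3_main _ _ sym conn _ _ _ _ _ hd e0 hk hb0).
by move=> hg; rewrite -[(gamma ^ k).+1]addn1; apply: hN.
Qed.
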